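(* For all real numbers $m>0$ and $p>0$, the Harmonic Vase $HV(m,p)\subset\mathbb{R}^3$ is compact.
   Context: Use cylindrical coordinates $(r,\varphi,z)$ on $\mathbb{R}^3$, so that a point has Cartesian coordinates $(r\cos\varphi, r\sin\varphi, z)$, with $\varphi\in[-\pi,\pi]$. For $m,p>0$, the Harmonic Vase $HV(m,p)$ is the union of two sets: (1) the pedestal $\{(x,y,0)\in\mathbb{R}^3 : x^2+y^2\le 9\}$; (2) the wall $W(m,p)=\{(r\cos\varphi, r\sin\varphi, z) : z\in(0,m],\ \varphi\in[-\pi,\pi],\ r=\tfrac{|\varphi|}{\pi}\sin\tfrac{\pi p}{z}+2\}$. *)

(* Defs.v *)
(* R : realType, R^3 as the product space (R * R) * R
   (product topology = Euclidean topology). *)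
From HB Require Import structures.
From mathcomp Require Import all_boot all_order all_algebra.
From mathcomp Require Import all_classical all_reals all_analysis.
Set Implicit Arguments. Unset Strict Implicit. Unset Printing Implicit Defensive.
Import Order.TTheory GRing.Theory Num.Theory.
Import numFieldNormedType.Exports.
Local Open Scope classical_set_scope.
Local Open Scope ring_scope.

Definition cyl {R : realType} (r phi z : R) : (R * R) * R :=
  ((r * cos phi, r * sin phi), z).

Definition pedestal (R : realType) : set ((R * R) * R) :=
  [set v | v.2 = 0 /\ v.1.1 ^+ 2 + v.1.2 ^+ 2 <= 9].

Definition wall (R : realType) (m p : R) : set ((R * R) * R) :=
  [set v | exists z phi : R,
      [/\ 0 < z <= m, - pi <= phi <= pi &
          v = cyl (`|phi| / pi * sin (pi * p / z) + 2) phi z]].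

Definition harmonic_vase (R : realType) (m p : R) : set ((R * R) * R) :=
  @pedestal R `|` @wall R m p.

(* Main.v *)
Require Import Defs.
From HB Require Import structures.
From mathcomp Require Import all_boot all_order all_algebra.
From mathcomp Require Import all_classical all_reals all_analysis.
From mathcomp Require Import lra.
Import Order.TTheory GRing.Theory Num.Theory.
Import numFieldNormedType.Exports.
Local Open Scope classical_set_scope.
Local Open Scope ring_scope.

Section S.
Context {R : realType}.

Lemma c_snd : continuous (fun w : ((R*R)*R)%type => w.2).
Proof. move=> w; exact: cvg_snd. Qed.
Lemma c_fst2 : continuous (fun w : (R*R)%type => w.1).
Proof. move=> w; exact: cvg_fst. Qed.
Lemma c_snd2 : continuous (fun w : (R*R)%type => w.2).
Proof. move=> w; exact: cvg_snd. Qed.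
Lemma c_q : continuous (fun w : ((R*R)*R)%type => w.1.1 ^+ 2 + w.1.2 ^+ 2).
Proof.
move=> w. apply: cvgD; rewrite expr2; apply: cvgM.
- apply: (@cvg_comp _ _ _ fst fst); [exact: cvg_fst| exact: cvg_fst].
- apply: (@cvg_comp _ _ _ fst fst); [exact: cvg_fst| exact: cvg_fst].
- apply: (@cvg_comp _ _ _ fst snd); [exact: cvg_fst| exact: cvg_snd].
- apply: (@cvg_comp _ _ _ fst snd); [exact: cvg_fst| exact: cvg_snd].
Qed.

Definition gmap (p c : R) (u : (R*R)%type) : ((R*R)*R)%type :=
  cyl (`|u.2| / pi * sin (pi * p / Num.max u.1 c) + 2) u.2 u.1.

Lemma c_g p c : 0 < c -> continuous (gmap p c).
Proof.
move=> c0 [z phi].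
have rc : (fun u : (R*R)%type => `|u.2| / pi * sin (pi * p / Num.max u.1 c) + 2) @ nbhs (z,phi) -->
   (`|phi| / pi * sin (pi * p / Num.max z c) + 2).
  apply: cvgD; last exact: cvg_cst.
  apply: cvgM.
    apply: cvgM; last exact: cvg_cst.
    apply: cvg_norm; exact: cvg_snd.
  apply: (@cvg_comp _ _ _ (fun u : (R*R)%type => pi * p / Num.max u.1 c) sin); last exact: continuous_sin.
  apply: cvgM; first exact: cvg_cst.
  apply: cvgV.
    by rewrite gt_eqF // (lt_le_trans c0) // le_max lexx orbT.
  rewrite maxr_absE.
  have -> : (fun u : (R*R)%type => Num.max u.1 c) = (fun u => (u.1 + c + `|u.1 - c|) / 2).
    by apply: funext => u; rewrite maxr_absE.
  apply: cvgM; last exact: cvg_cst.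
  apply: cvgD; first (apply: cvgD; [exact: cvg_fst| exact: cvg_cst]).
  apply: cvg_norm; apply: cvgB; [exact: cvg_fst| exact: cvg_cst].
rewrite /gmap /cyl.
apply: (cvg_pair (G:=nbhs _) (H:=nbhs _)); last exact: cvg_fst.
apply: (cvg_pair (G:=nbhs _) (H:=nbhs _)); apply: cvgM => //.
- apply: (@cvg_comp _ _ _ snd cos); [exact: cvg_snd | exact: continuous_cos].
- apply: (@cvg_comp _ _ _ snd sin); [exact: cvg_snd | exact: continuous_sin].
Qed.

Lemma clos_nbhs {T : topologicalType} {A : set T} {v N} :
  closure A v -> nbhs v N -> exists w, A w /\ N w.
Proof. by move=> /(_ N) h /h [w [Aw Nw]]; exists w. Qed.

Lemma near_lt {T : topologicalType} {h : T -> R} {v c} :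
  continuous h -> h v < c -> nbhs v [set w | h w < c].
Proof. by move=> hc hv; exact: (hc v _ (lt_nbhsl hv)). Qed.

Lemma near_gt {T : topologicalType} {h : T -> R} {v c} :
  continuous h -> c < h v -> nbhs v [set w | c < h w].
Proof. by move=> hc hv; exact: (hc v _ (lt_nbhsr hv)). Qed.

Lemma wall_bnd (m p : R) w : wall m p w ->
  [/\ 0 < w.2 <= m & w.1.1 ^+ 2 + w.1.2 ^+ 2 <= 9].
Proof.
move=> [z [phi [/andP[z0 zm] /andP[p1 p2] ->]]] /=.
split; first by rewrite z0 zm.
have pi0 := pi_gt0 R.
set r := _ + 2.
have -> : (r * cos phi) ^+ 2 + (r * sin phi) ^+ 2 = r ^+ 2.
  by rewrite !exprMn -mulrDr cos2Dsin2 mulr1.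
have a0 : 0 <= `|phi| / pi by rewrite divr_ge0 // ltW.
have a1 : `|phi| / pi <= 1.
  by rewrite ler_pdivrMr // mul1r ler_norml p1 p2.
have s1 := sin_max (pi * p / z).
have : `| `|phi| / pi * sin (pi * p / z)| <= 1.
  rewrite normrM ger0_norm //.
  by rewrite -[1]mulr1 ler_pM.
rewrite ler_norml => /andP[l1 l2].
rewrite /r; nra.
Qed.
End S.

Theorem mainTheorem2 (R : realType) (m p : R) (hm : 0 < m) (hp : 0 < p) :
  compact (harmonic_vase m p).
Proof.
have pi0 := pi_gt0 R.
have bnd : forall w, harmonic_vase m p w ->
    [/\ 0 <= w.2 <= m & w.1.1 ^+ 2 + w.1.2 ^+ 2 <= 9].
  move=> w [[-> h]|/wall_bnd [/andP[h1 h2] h3]]; split => //.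
  - by rewrite lexx ltW.
  - by rewrite ltW.
have Hcl : closed (harmonic_vase m p).
  move=> v clv.
  have z0 : 0 <= v.2.
    rewrite leNgt; apply/negP => hz.
    have [w [/bnd [/andP[w1 _] _] /= Nw]] := clos_nbhs clv (near_lt (@c_snd R) hz).
    by move: Nw; rewrite ltNge w1.
  have zm : v.2 <= m.
    rewrite leNgt; apply/negP => hz.
    have [w [/bnd [/andP[_ w1] _] /= Nw]] := clos_nbhs clv (near_gt (@c_snd R) hz).
    by move: Nw; rewrite ltNge w1.
  have q9 : v.1.1 ^+ 2 + v.1.2 ^+ 2 <= 9.
    rewrite leNgt; apply/negP => hz.
    have [w [/bnd [_ w1] /= Nw]] := clos_nbhs clv (near_gt (@c_q R) hz).
    by move: Nw; rewrite ltNge w1.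
  have [vz0|vzn] := eqVneq v.2 0; first by left.
  have vpos : 0 < v.2 by rewrite lt_neqAle eq_sym vzn z0.
  set c := v.2 / 2.
  have c0 : 0 < c by rewrite divr_gt0.
  have cv : c < v.2 by rewrite /c ltr_pdivrMr // ltr_pMr // ltr1n.
  set K := (`[c, m] `*` `[- pi, pi]) : set (R * R)%type.
  have Kc : compact K by apply: compact_setX; exact: segment_compact.
  have Cc : compact (gmap p c @` K).
    by apply: continuous_compact => //; apply: continuous_subspaceT; exact: c_g.
  have Ccl : closed (gmap p c @` K) := compact_closed (@norm_hausdorff _ _) Cc.
  have : closure (gmap p c @` K) v.
    move=> N Nv.
    have NN : nbhs v (N `&` [set w | c < w.2]).
      by apply: filterI => //; exact: (near_gt (@c_snd R) cv).
    have [w [Hw [Nw cw]]] := clos_nbhs clv NN.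
    exists w; split => //.
    case: Hw => [[w20 _]|[z [phi [/andP[z0' zm'] hphi wE]]]].
      by move: cw => /=; rewrite w20 ltNge ltW.
    have zc : c <= z by move: cw => /=; rewrite wE /= => /ltW.
    exists (z, phi).
      by split; rewrite /= in_itv /=; [rewrite zc zm'|].
    by rewrite wE /gmap /= max_l.
  move=> /Ccl [[z phi] [/= hz hphi] <-].
  move: hz hphi; rewrite !in_itv /= => /andP[zc zm'] hphi.
  right; exists z, phi; split => //.
    by rewrite zm' andbT (lt_le_trans c0).
  by rewrite /gmap /= max_l.
have Bc : compact ((`[-3, 3] `*` `[-3, 3]) `*` `[0, m] : set ((R * R) * R)%type).
  apply: compact_setX; last exact: segment_compact.
  by apply: compact_setX; exact: segment_compact.
apply: (subclosed_compact Hcl Bc).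
move=> w /bnd [/andP[w1 w2] w3].
have x3 : w.1.1 ^+ 2 <= 9 by move: w3; have := sqr_ge0 w.1.2; lra.
have y3 : w.1.2 ^+ 2 <= 9 by move: w3; have := sqr_ge0 w.1.1; lra.
split; [split|]; rewrite /= in_itv /=; apply/andP; split => //; nra.
Qed.
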